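(* Let $k\ge1$, $a>0$, and let $P:\{0,1,\ldots,k\}^2\to\mathbb R$ satisfy $P(0,l)=0$ for all $l\in\{0,\ldots,k\}$, $$-2aP(1,0)=P(j,l)+P(l,j)-a\big(P(j+1,l)-P(j,l)\big)-a\big(P(l+1,j)-P(l,j)\big)\quad\text{for all }(j,l)\in\{0,\ldots,k-1\}^2,$$ $$P(k,0)-aP(1,k)=P(j,k)+P(k,j)-a\big(P(j+1,k)-P(j,k)\big)\quad\text{for all }j\in\{0,\ldots,k-1\}.$$ Then $$P(k,k)=\big((1+1/a)^k-1\big)^2aP(1,0)+\big((1+1/a)^k-1\big)\big(aP(1,k)-P(k,0)\big).$$ *)

(* Defs.v *)
From Stdlib Require Import Reals.

(* Main.v *)
Require Import Defs.
From Stdlib Require Import Reals Lra Lia.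
Open Scope R_scope.

Fixpoint sm (n : nat) (f : nat -> R) : R :=
  match n with O => 0 | S n => sm n f + f n end.

Lemma sm_ext n f g : (forall i, (i < n)%nat -> f i = g i) -> sm n f = sm n g.
Proof. induction n; intros H; simpl; auto. rewrite IHn by (intros; apply H; lia).
rewrite H by lia; auto. Qed.

Lemma sm_plus n f g : sm n (fun i => f i + g i) = sm n f + sm n g.
Proof. induction n; simpl; [lra|rewrite IHn; lra]. Qed.

Lemma sm_scal n c f : sm n (fun i => c * f i) = c * sm n f.
Proof. induction n; simpl; [lra|rewrite IHn; lra]. Qed.

Lemma sm_tele n g : sm n (fun i => g i - g (S i)) = g O - g n.
Proof. induction n; simpl; [lra|rewrite IHn; lra]. Qed.

Lemma sm_swap n m f : sm n (fun j => sm m (fun l => f j l)) = sm m (fun l => sm n (fun j => f j l)).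
Proof. induction n; simpl.
- induction m; simpl; [lra|rewrite <- IHm; lra].
- rewrite IHn, <- sm_plus. reflexivity. Qed.

Theorem lemma3 (k : nat) (a : R) (P : nat -> nat -> R)
  (hk : (1 <= k)%nat) (ha : 0 < a)
  (h0 : forall l, (l <= k)%nat -> P 0%nat l = 0)
  (h1 : forall j l, (j < k)%nat -> (l < k)%nat ->
     - 2 * a * P 1%nat 0%nat =
       P j l + P l j - a * (P (S j) l - P j l) - a * (P (S l) j - P l j))
  (h2 : forall j, (j < k)%nat ->
     P k 0%nat - a * P 1%nat k =
       P j k + P k j - a * (P (S j) k - P j k)) :
  P k k = ((1 + 1 / a) ^ k - 1) ^ 2 * a * P 1%nat 0%nat
          + ((1 + 1 / a) ^ k - 1) * (a * P 1%nat k - P k 0%nat).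
Proof.
  set (x := a / (1 + a)).
  set (c := P 1%nat 0%nat).
  set (B := P k 0%nat - a * P 1%nat k).
  set (A := fun j l => x ^ (j + l) * P j l).
  set (F := fun j l => A j l - A (S j) l).
  set (G := sm k (fun i => x ^ i)).
  assert (hx : 0 < x) by (unfold x; apply Rdiv_lt_0_compat; lra).
  assert (hx1 : x < 1) by (unfold x; apply Rmult_lt_reg_r with (1+a); [lra|];
     unfold Rdiv; rewrite Rmult_assoc, Rinv_l by lra; lra).
  assert (HG : G * (1 - x) = 1 - x ^ k).
  { unfold G. clear -x. induction k as [|n IHn]; simpl; [lra|]. rewrite Rmult_plus_distr_r, IHn. lra. }
  assert (HF : forall j l, (j < k)%nat -> (l < k)%nat ->
            F j l + F l j = -2 * c * (x * x ^ j * x ^ l)).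
  { intros j l Hj Hl. unfold F, A. simpl. rewrite (Nat.add_comm l j), !pow_add.
    set (t := x ^ j * x ^ l). simpl.
    replace (-2 * c * (x * x ^ j * x ^ l)) with (t / (1+a) * (-2 * a * c))
      by (unfold t, x; field; lra).
    unfold c. rewrite (h1 j l Hj Hl). unfold x. field. lra. }
  assert (HD : sm k (fun l => A k l) = c * x * G * G).
  { assert (E : sm k (fun j => sm k (fun l => F j l + F l j)) =
                sm k (fun j => sm k (fun l => -2 * c * (x * x ^ j * x ^ l)))).
    { apply sm_ext; intros j Hj; apply sm_ext; intros l Hl; auto. }
    assert (E2 : sm k (fun j => sm k (fun l => F j l + F l j)) =
                 sm k (fun l => sm k (fun j => F j l)) + sm k (fun j => sm k (fun l => F l j))).
    { assert (sw := sm_swap k k (fun j l => F j l)). cbv beta in sw.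
      assert (pl : sm k (fun j => sm k (fun l => F j l + F l j)) =
         sm k (fun j => sm k (fun l => F j l)) + sm k (fun j => sm k (fun l => F l j)))
        by (rewrite <- sm_plus; apply sm_ext; intros; apply sm_plus).
      lra. }
    assert (T : forall j, (j <= k)%nat -> sm k (fun l => F l j) = - A k j).
    { intros j Hj. unfold F. rewrite (sm_tele k (fun l => A l j)). unfold A.
      rewrite h0 by lia. lra. }
    assert (E3 : sm k (fun j => sm k (fun l => F l j)) = - sm k (fun j => A k j)).
    { rewrite (sm_ext k _ (fun j => -1 * A k j)).
      - rewrite (sm_scal k (-1) (fun j => A k j)). lra.
      - intros; rewrite T by lia; lra. }
    assert (E4 : sm k (fun j => sm k (fun l => -2 * c * (x * x ^ j * x ^ l))) =
                 -2 * c * x * G * G).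
    { rewrite (sm_ext k _ (fun j => (-2 * c * x * G) * x ^ j)).
      - rewrite (sm_scal k (-2 * c * x * G) (fun j => x ^ j)). fold G. ring.
      - intros j _. rewrite (sm_ext k _ (fun l => (-2 * c * x * x ^ j) * x ^ l))
          by (intros; ring).
        rewrite (sm_scal k _ (fun l => x ^ l)). fold G. ring. }
    rewrite E2, E3, E4 in E. lra. }
  assert (H2 : forall j, (j < k)%nat ->
     (1 + a) * (x ^ j * P j k - x ^ (S j) * P (S j) k) + x ^ j * P k j = x ^ j * B).
  { intros j Hj. unfold B. rewrite (h2 j Hj). simpl. unfold x. field. lra. }
  assert (HS : (1 + a) * (P O k - x ^ k * P k k) + sm k (fun j => x ^ j * P k j) = B * G).
  { assert (S0 : sm k (fun j => (1 + a) * (x ^ j * P j k - x ^ (S j) * P (S j) k) + x ^ j * P k j)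
               = sm k (fun j => B * x ^ j)).
    { apply sm_ext; intros j Hj. rewrite H2 by auto. ring. }
    rewrite (sm_plus k (fun j => (1 + a) * (x ^ j * P j k - x ^ (S j) * P (S j) k))
                       (fun j => x ^ j * P k j)) in S0.
    rewrite (sm_scal k (1 + a) (fun j => x ^ j * P j k - x ^ (S j) * P (S j) k)) in S0.
    rewrite (sm_scal k B (fun j => x ^ j)) in S0.
    rewrite (sm_tele k (fun j => x ^ j * P j k)) in S0. simpl in S0. fold G in S0.
    rewrite <- S0. ring. }
  assert (HK : x ^ k * sm k (fun j => x ^ j * P k j) = c * x * G * G).
  { rewrite <- HD, <- sm_scal. apply sm_ext; intros. unfold A. rewrite pow_add. ring. }
  rewrite h0 in HS by lia.
  assert (Hr : (1 + 1 / a) ^ k = / x ^ k).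
  { rewrite <- pow_inv. f_equal. unfold x. field. lra. }
  rewrite Hr. fold c. replace (a * P 1%nat k - P k 0%nat) with (- B) by (unfold B; ring).
  assert (Hy : 0 < x ^ k) by (apply pow_lt; auto).
  assert (HGv : G = (1 - x ^ k) * (1 + a)).
  { replace (1 + a) with (/ (1 - x)) by (unfold x; field; lra).
    rewrite <- HG. field. lra. }
  set (y := x ^ k) in *.
  assert (E : (1 + a) * y * y * P k k = c * x * G * G - B * G * y) by nra.
  rewrite HGv in E. unfold x in E.
  apply Rmult_eq_reg_l with ((1 + a) * y * y); [|apply Rgt_not_eq; nra].
  rewrite E. field. split; lra.
Qed.
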